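(* Let $H$ be a real Hilbert space with inner product $(\cdot,\cdot)_H$ and norm $\|\cdot\|_H$, let $\Phi\in H$, and let $\mathbf{L}(\Phi)=\mathbf{M}(\Phi)+\mathbf{S}(\Phi)$, where $\mathbf{S}(\Phi)$ is a skew-symmetric linear operator on $H$ and $-\mathbf{M}(\Phi)$ is a symmetric positive definite linear operator on $H$. Assume there are positive constants $\alpha_{\mathbf{M}},\beta_{\mathbf{S}}$ such that for all $\Psi_1,\Psi_2,\Psi\in H$, $$(\mathbf{S}(\Phi)\Psi_1,\Psi_2)_H\le\beta_{\mathbf{S}}\|\Psi_1\|_H\|\Psi_2\|_H,\qquad(-\mathbf{M}(\Phi)\Psi,\Psi)_H\ge\alpha_{\mathbf{M}}\|\Psi\|_H^2.$$ Then for all $\Psi_1,\Psi_2\in H$, $$(\mathbf{L}(\Phi)\Psi_1,\Psi_2)_H\le\Big(1+\tfrac{\beta_{\mathbf{S}}}{\alpha_{\mathbf{M}}}\Big)(\Psi_1,-\mathbf{M}(\Phi)\Psi_1)_H^{1/2}(\Psi_2,-\mathbf{M}(\Phi)\Psi_2)_H^{1/2}.$$ *)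

(* Defs.v *)
From HB Require Import structures.
From mathcomp Require Import all_boot all_order all_algebra.
From mathcomp Require Import all_classical all_reals all_analysis.
Set Implicit Arguments. Unset Strict Implicit. Unset Printing Implicit Defensive.
Import Order.TTheory GRing.Theory Num.Theory.
Import numFieldNormedType.Exports.
Local Open Scope ring_scope.

(* [ip] is an inner product on the real normed space [H] inducing its norm:
   symmetric, linear in the first argument, and (x,x) = |x|^2.
   Together with completeness of [H] this makes H a real Hilbert space. *)
Definition is_inner_product (R : realType) (H : normedModType R)
  (ip : H -> H -> R) : Prop :=
  [/\ (forall x y, ip x y = ip y x),
      (forall (a : R) (x y z : H), ip (a *: x + y) z = a * ip x z + ip y z)
    & (forall x, ip x x = `|x| ^+ 2)].

Definition is_linear_op (R : realType) (H : normedModType R) (T : H -> H) : Prop :=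
  forall (a : R) (x y : H), T (a *: x + y) = a *: T x + T y.

(* Main.v *)
Require Import Defs.
From HB Require Import structures.
From mathcomp Require Import all_boot all_order all_algebra.
From mathcomp Require Import all_classical all_reals all_analysis.
From mathcomp Require Import ring lra.
Import Order.TTheory GRing.Theory Num.Theory.
Import numFieldNormedType.Exports.
Local Open Scope ring_scope.

Lemma lin0 {R : realType} {H : normedModType R} {T : H -> H} :
  is_linear_op T -> T 0 = 0.
Proof.
move=> hT; have := hT 1 0 0; rewrite !scale1r addr0 => h.
by apply: (addrI (T 0)); rewrite addr0 -h.
Qed.

Lemma linZ {R : realType} {H : normedModType R} {T : H -> H} a x :
  is_linear_op T -> T (a *: x) = a *: T x.
Proof. by move=> hT; have := hT a x 0; rewrite !addr0 lin0 ?addr0. Qed.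

Lemma linD {R : realType} {H : normedModType R} {T : H -> H} x y :
  is_linear_op T -> T (x + y) = T x + T y.
Proof. by move=> hT; have := hT 1 x y; rewrite !scale1r. Qed.

Lemma ip0 {R : realType} {H : normedModType R} {ip : H -> H -> R} z :
  is_inner_product ip -> ip 0 z = 0.
Proof.
case=> _ hl _; have := hl 1 0 0 z; rewrite scale1r addr0 mul1r => h.
by apply: (addrI (ip 0 z)); rewrite addr0 -h.
Qed.

Lemma ipZ {R : realType} {H : normedModType R} {ip : H -> H -> R} a x z :
  is_inner_product ip -> ip (a *: x) z = a * ip x z.
Proof.
move=> hip; have [_ hl _] := hip.
by have := hl a x 0 z; rewrite !addr0 (ip0 _ hip) addr0.
Qed.

Lemma ipD {R : realType} {H : normedModType R} {ip : H -> H -> R} x y z :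
  is_inner_product ip -> ip (x + y) z = ip x z + ip y z.
Proof. by case=> _ hl _; have := hl 1 x y z; rewrite scale1r mul1r. Qed.

Lemma ipN {R : realType} {H : normedModType R} {ip : H -> H -> R} x z :
  is_inner_product ip -> ip (- x) z = - ip x z.
Proof. by move=> hip; rewrite -scaleN1r (ipZ _ _ _ hip) mulN1r. Qed.

Theorem lemma3p7 (R : realType) (H : completeNormedModType R)
  (ip : H -> H -> R) (Hip : is_inner_product ip)
  (M S : H -> H -> H) (Phi : H) (alphaM betaS : R)
  (HMlin : is_linear_op (M Phi)) (HSlin : is_linear_op (S Phi))
  (HSskew : forall x y : H, ip (S Phi x) y = - ip x (S Phi y))
  (HMsym : forall x y : H, ip (- M Phi x) y = ip x (- M Phi y))
  (HMpd : forall x : H, x != 0 -> 0 < ip (- M Phi x) x)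
  (Halpha : 0 < alphaM) (Hbeta : 0 < betaS)
  (HSbound : forall x1 x2 : H, ip (S Phi x1) x2 <= betaS * `|x1| * `|x2|)
  (HMcoer : forall x : H, ip (- M Phi x) x >= alphaM * `|x| ^+ 2) :
  forall x1 x2 : H,
    ip (M Phi x1 + S Phi x1) x2 <=
      (1 + betaS / alphaM) * Num.sqrt (ip x1 (- M Phi x1))
                           * Num.sqrt (ip x2 (- M Phi x2)).
Proof.
move=> x1 x2.
have [Hsym _ _] := Hip.
set A := fun x => - M Phi x.
have Alin : is_linear_op A.
  by move=> a x y; rewrite /A HMlin opprD scalerN.
have qE x : ip x (A x) = ip (A x) x by rewrite Hsym.
rewrite !qE.
set q1 := ip (A x1) x1; set q2 := ip (A x2) x2.
set c := ip (A x1) x2.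
have cE : ip (A x2) x1 = c by rewrite /c /A HMsym Hsym.
have q1ge : alphaM * `|x1| ^+ 2 <= q1 by exact: HMcoer.
have q2ge : alphaM * `|x2| ^+ 2 <= q2 by exact: HMcoer.
have q1pos : 0 <= q1 by apply: le_trans _ q1ge; rewrite mulr_ge0 ?(ltW Halpha) ?exprn_ge0 ?normr_ge0.
have q2pos : 0 <= q2 by apply: le_trans _ q2ge; rewrite mulr_ge0 ?(ltW Halpha) ?exprn_ge0 ?normr_ge0.
set s1 := Num.sqrt q1; set s2 := Num.sqrt q2.
have s1ge : 0 <= s1 by exact: sqrtr_ge0.
have s2ge : 0 <= s2 by exact: sqrtr_ge0.
have s1sq : s1 ^+ 2 = q1 by rewrite sqr_sqrtr.
have s2sq : s2 ^+ 2 = q2 by rewrite sqr_sqrtr.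
have LHS : ip (M Phi x1 + S Phi x1) x2 = - c + ip (S Phi x1) x2.
  by rewrite (ipD _ _ _ Hip) -[M Phi x1]opprK (ipN _ _ Hip).
rewrite LHS.
(* Cauchy-Schwarz for A *)
have CS : - c <= s1 * s2.
  pose z := s2 *: x1 + s1 *: x2.
  have zpos : 0 <= ip (A z) z.
    apply: le_trans _ (HMcoer z); rewrite mulr_ge0 ?(ltW Halpha) ?exprn_ge0 ?normr_ge0 //.
  have e1 : ip (A x1) z = s2 * q1 + s1 * c.
    rewrite Hsym /z (ipD _ _ _ Hip) !(ipZ _ _ _ Hip).
    by rewrite (Hsym x1) (Hsym x2).
  have e2 : ip (A x2) z = s2 * c + s1 * q2.
    rewrite Hsym /z (ipD _ _ _ Hip) !(ipZ _ _ _ Hip).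
    by rewrite (Hsym x1) (Hsym x2) cE.
  have zE : ip (A z) z = 2 * (s1 * s2) * (s1 * s2 + c).
    have -> : A z = s2 *: A x1 + s1 *: A x2 by rewrite /z (linD _ _ Alin) !(linZ _ _ Alin).
    rewrite (ipD _ _ _ Hip) !(ipZ _ _ _ Hip) e1 e2 -s1sq -s2sq.
    ring.
  have [s0|spos] := eqVneq (s1 * s2) 0.
    rewrite s0.
    move: s0 => /eqP; rewrite mulf_eq0 => /orP[] /eqP s0.
      have : q1 = 0 by rewrite -s1sq s0 expr0n.
      move=> q10; have h : `|x1| ^+ 2 <= 0.
        by rewrite -(pmulr_rle0 _ Halpha) -q10.
      have x10 : x1 = 0.
        by apply/eqP; rewrite -normr_eq0 -sqrf_eq0 eq_le h exprn_ge0 ?normr_ge0.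
      by rewrite /c x10 (lin0 Alin) (ip0 _ Hip) oppr0.
    have : q2 = 0 by rewrite -s2sq s0 expr0n.
    move=> q20; have h : `|x2| ^+ 2 <= 0.
      by rewrite -(pmulr_rle0 _ Halpha) -q20.
    have x20 : x2 = 0.
      by apply/eqP; rewrite -normr_eq0 -sqrf_eq0 eq_le h exprn_ge0 ?normr_ge0.
    by rewrite -cE x20 (lin0 Alin) (ip0 _ Hip) oppr0.
  have sp : 0 < s1 * s2 by rewrite lt_def spos mulr_ge0.
  rewrite zE in zpos.
  have : 0 <= s1 * s2 + c.
    have h2 : 0 < 2 * (s1 * s2) by rewrite mulr_gt0.
    by rewrite -(pmulr_rge0 _ h2).
  lra.
have NB : alphaM * (`|x1| * `|x2|) <= s1 * s2.
  have h1 : alphaM * `|x1| ^+ 2 <= s1 ^+ 2 by rewrite s1sq.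
  have h2 : alphaM * `|x2| ^+ 2 <= s2 ^+ 2 by rewrite s2sq.
  have n1 := normr_ge0 x1; have n2 := normr_ge0 x2.
  have key : (alphaM * (`|x1| * `|x2|)) ^+ 2 <= (s1 * s2) ^+ 2.
    have -> : (alphaM * (`|x1| * `|x2|)) ^+ 2 =
       (alphaM * `|x1| ^+ 2) * (alphaM * `|x2| ^+ 2) by ring.
    rewrite exprMn; apply: ler_pM => //; rewrite mulr_ge0 ?exprn_ge0 ?(ltW Halpha) //.
  by move: key; rewrite ler_sqr // nnegrE ?mulr_ge0 ?(ltW Halpha).
have SB := HSbound x1 x2.
have : betaS * `|x1| * `|x2| <= betaS / alphaM * (s1 * s2).
  have -> : betaS * `|x1| * `|x2| = betaS / alphaM * (alphaM * (`|x1| * `|x2|)).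
    by field; rewrite gt_eqF.
  by rewrite ler_pM2l ?divr_gt0.
have -> : (1 + betaS / alphaM) * s1 * s2 = s1 * s2 + betaS / alphaM * (s1 * s2) by ring.
lra.
Qed.
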